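(* Let $E$ be a directed graph, $S=M(\mathbb{Z},I)\cup\{0\}$, $w$ a canonical weight mapping on $E$, and $e$ a nonzero idempotent of $S$. Let $S_E=\{s\in S\setminus\{0\}:\ w(\mu)=s \text{ for some } \mu\in E^*\}$ and $S_e=\{s\in S_E: ss^{-1}=e\}$, and for $s,t\in S_e$ put $s\le t$ iff every path of weight $t$ contains an initial subpath of weight $s$. Then $S_e$ is a directed set with respect to $\le$.
   Context: Directed graph $E=(E^0,E^1,\mathrm{r},\mathrm{s})$; $E^*$ is the set of paths (finite sequences $\alpha_1\cdots\alpha_k$ of edges with $\mathrm{r}(\alpha_i)=\mathrm{s}(\alpha_{i+1})$, vertices being paths of length $0$); initial subpaths of $\alpha_1\cdots\alpha_k$ are $\mathrm{s}(\alpha_1)$ and $\alpha_1\cdots\alpha_m$, $m\le k$. $M(\mathbb{Z},I)=I\times\mathbb{Z}\times I$ with $(i,a,j)(k,b,l)=(i,a+b,l)$ if $j=k$, else undefined; $S=M(\mathbb{Z},I)\cup\{0\}$ with undefined products $0$, $0$ absorbing; $(i,a,j)^{-1}=(j,-a,i)$. Canonical weight mapping: each vertex gets weight $(i,0,i)$, each edge weight $(i,1,j)$, $w(\mathrm{s}(\alpha))w(\alpha)=w(\alpha)=w(\alpha)w(\mathrm{r}(\alpha))$; for each nonzero idempotent $f$ all edges whose source has weight $f$ have the same weight and all edges whose range has weight $f$ have the same weight; $w(\alpha_1\cdots\alpha_k)=w(\alpha_1)\cdots w(\alpha_k)$. A directed set is a set with a reflexive transitive relation in which any two elements have an upper bound.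 *)

(* Defs.v *)
From Stdlib Require Import ZArith.
From mathcomp Require Import all_boot.
Set Implicit Arguments. Unset Strict Implicit. Unset Printing Implicit Defensive.

(* The semigroup S = M(Z,I) u {0}: None is 0, Some (i,a,j) is (i,a,j). *)
Definition Sg (I : eqType) := option (I * Z * I).

Definition smul (I : eqType) (x y : Sg I) : Sg I :=
  match x, y with
  | Some (i, a, j), Some (k, b, l) =>
      if j == k then Some (i, (a + b)%Z, l) else None
  | _, _ => None
  end.

Definition sinv (I : eqType) (x : Sg I) : Sg I :=
  match x with
  | Some (i, a, j) => Some (j, (- a)%Z, i)
  | None => None
  end.

Definition nonzero_idem (I : eqType) (f : Sg I) : Prop :=
  f <> None /\ smul f f = f.

(* A directed graph E = (V, Ed, r, s).  A path is a pair (v, l) where l is a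
   list of edges, with s(first edge) = v and r(a_i) = s(a_{i+1});
   (v, [::]) is the vertex v seen as a path of length 0. *)
Fixpoint is_path (V Ed : Type) (r s : Ed -> V) (v : V) (l : seq Ed) : Prop :=
  match l with
  | [::] => True
  | a :: l' => s a = v /\ is_path r s (r a) l'
  end.

Definition path_weight (I : eqType) (V Ed : Type)
  (wv : V -> Sg I) (we : Ed -> Sg I) (v : V) (l : seq Ed) : Sg I :=
  match l with
  | [::] => wv v
  | a :: l' => foldl (fun acc b => smul acc (we b)) (we a) l'
  end.

Definition canonical_weight (I : eqType) (V Ed : Type) (r s : Ed -> V)
  (wv : V -> Sg I) (we : Ed -> Sg I) : Prop :=
  (forall v, exists i, wv v = Some (i, 0%Z, i)) /\
  (forall a, exists i j, we a = Some (i, 1%Z, j)) /\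
  (forall a, smul (wv (s a)) (we a) = we a /\ we a = smul (we a) (wv (r a))) /\
  (forall f, nonzero_idem f ->
     (forall a b, wv (s a) = f -> wv (s b) = f -> we a = we b) /\
     (forall a b, wv (r a) = f -> wv (r b) = f -> we a = we b)).

Definition in_SE (I : eqType) (V Ed : Type) (r s : Ed -> V)
  (wv : V -> Sg I) (we : Ed -> Sg I) (x : Sg I) : Prop :=
  x <> None /\ exists v l, is_path r s v l /\ path_weight wv we v l = x.

Definition in_Se (I : eqType) (V Ed : Type) (r s : Ed -> V)
  (wv : V -> Sg I) (we : Ed -> Sg I) (e x : Sg I) : Prop :=
  in_SE r s wv we x /\ smul x (sinv x) = e.

(* x <= y iff every path of weight y has an initial subpath of weight x;
   the initial subpaths of (v, l) are (v, take m l), m <= size l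
   (m = 0 gives the source vertex). *)
Definition wle (I : eqType) (V Ed : Type) (r s : Ed -> V)
  (wv : V -> Sg I) (we : Ed -> Sg I) (x y : Sg I) : Prop :=
  forall v l, is_path r s v l -> path_weight wv we v l = y ->
    exists m, m <= size l /\ path_weight wv we v (take m l) = x.

Definition directed_on (T : Type) (P : T -> Prop) (le : T -> T -> Prop) : Prop :=
  (forall x, P x -> le x x) /\
  (forall x y z, P x -> P y -> P z -> le x y -> le y z -> le x z) /\
  (forall x y, P x -> P y -> exists z, P z /\ le x z /\ le y z).

(* Main.v *)
Require Import Defs.
From Stdlib Require Import ZArith Lia.
From mathcomp Require Import all_boot.

Section Aux.
Variables (I : eqType) (V Ed : Type) (r s : Ed -> V)
  (wv : V -> Sg I) (we : Ed -> Sg I).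
Hypothesis CW : canonical_weight r s wv we.

Definition endpt (v : V) (l : seq Ed) := last v (map r l).

Lemma is_path_take v l m : is_path r s v l -> is_path r s v (take m l).
Proof.
elim: l v m => [|a l IH] v [|m] //= [H1 H2]; split => //; exact: IH.
Qed.

Lemma edge_w a : exists i j, wv (s a) = Some (i, 0%Z, i) /\
  wv (r a) = Some (j, 0%Z, j) /\ we a = Some (i, 1%Z, j).
Proof.
case: CW => Hv [He [Hsr _]].
have [i Hi] := Hv (s a); have [j Hj] := Hv (r a); have [i' [j' Ha]] := He a.
case: (Hsr a) => H1 H2.
rewrite Hi Ha /= in H1. case: eqP H1 => // Eii _; subst i'.
rewrite Ha Hj /= in H2. case: eqP H2 => // Ejj _; subst j'.
by exists i, j.
Qed.

Lemma fold_w l : forall u i n k, wv u = Some (k, 0%Z, k) -> is_path r s u l ->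
  exists j, wv (endpt u l) = Some (j, 0%Z, j) /\
  foldl (fun acc b => smul acc (we b)) (Some (i, n, k)) l
    = Some (i, (n + Z.of_nat (size l))%Z, j).
Proof.
elim: l => [|a l IH] u i n k Hu /=.
  move=> _; exists k; split => //; by rewrite Z.add_0_r.
move=> [Hs Hp].
have [i' [j [H1 [H2 H3]]]] := edge_w a.
rewrite Hs Hu in H1; case: H1 => ->.
rewrite H3 /= eqxx.
have [j' [Hj' Hf]] := IH (r a) i (n + 1)%Z j H2 Hp.
exists j'; split => //; rewrite Hf; congr (Some (_, _, _)); lia.
Qed.

Lemma pw v l : is_path r s v l -> exists i j, wv v = Some (i, 0%Z, i) /\
  wv (endpt v l) = Some (j, 0%Z, j) /\
  path_weight wv we v l = Some (i, Z.of_nat (size l), j).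
Proof.
case: l => [|a l] /=.
  move=> _; case: CW => Hv _; have [i Hi] := Hv v; by exists i, i.
move=> [Hs Hp].
have [i [j [H1 [H2 H3]]]] := edge_w a.
have [j' [Hj' Hf]] := fold_w l (r a) i 1%Z j H2 Hp.
exists i, j'; split; first by rewrite -Hs.
split => //. rewrite H3 Hf; congr (Some (_, _, _)); lia.
Qed.

Lemma det l : forall v l' v', is_path r s v l -> is_path r s v' l' ->
  size l = size l' -> wv v = wv v' -> wv (endpt v l) = wv (endpt v' l').
Proof.
elim: l => [|a l IH] v [|a' l'] v' //= [Hs Hp] [Hs' Hp'] [Hsz] Hvv.
apply: (IH (r a) l' (r a')) => //.
case: CW => Hv [_ [_ H4]].
have [i Hi] := Hv v.
have Hid : nonzero_idem (wv v) by rewrite Hi; split => //=; rewrite eqxx.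
have [Hsame _] := H4 _ Hid.
have Eaa : we a = we a' by apply: Hsame; rewrite ?Hs ?Hs'.
have [i1 [j1 [_ [Hr1 He1]]]] := edge_w a.
have [i2 [j2 [_ [Hr2 He2]]]] := edge_w a'.
rewrite He1 He2 in Eaa; case: Eaa => _ Ej.
by rewrite Hr1 Hr2 Ej.
Qed.

End Aux.
Arguments endpt {V Ed} r v l.
Arguments is_path_take {V Ed r s v l} m _.
Arguments pw {I V Ed r s wv we} CW {v l} _.
Arguments det {I V Ed r s wv we} CW {l v l' v'} _ _ _ _.

Theorem lemma5p7 (I : eqType) (V Ed : Type) (r s : Ed -> V)
  (wv : V -> Sg I) (we : Ed -> Sg I) (e : Sg I) :
  canonical_weight r s wv we ->
  nonzero_idem e ->
  directed_on (in_Se r s wv we e) (wle r s wv we).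
Proof.
move=> CW _.
split.
  move=> x _ v l Hp Hw; exists (size l); by rewrite leqnn take_size.
split.
  move=> x y z _ _ _ Hxy Hyz v l Hp Hw.
  have [m [Hm Hwm]] := Hyz v l Hp Hw.
  have [m' [Hm' Hwm']] := Hxy v (take m l) (is_path_take m Hp) Hwm.
  have Hs1 : size (take m l) <= size l by rewrite size_take; case: ifP => // /ltnW.
  have Hs2 : size (take m l) <= m by rewrite size_take; case: ifP => // /negbT; rewrite -leqNgt.
  exists m'; split; first exact: leq_trans Hm' Hs1.
  by rewrite take_takel // in Hwm'; exact: leq_trans Hm' Hs2.
have key : forall x y, in_Se r s wv we e x -> in_Se r s wv we e y ->
  forall v l i j, is_path r s v l -> wv v = Some (i, 0%Z, i) ->
  wv (endpt r v l) = Some (j, 0%Z, j) ->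
  path_weight wv we v l = x -> Some (i, Z.of_nat (size l), j) = x ->
  forall v' l' i' j', is_path r s v' l' -> wv v' = Some (i', 0%Z, i') ->
  wv (endpt r v' l') = Some (j', 0%Z, j') ->
  path_weight wv we v' l' = y -> Some (i', Z.of_nat (size l'), j') = y ->
  size l <= size l' -> wle r s wv we x y.
  move=> x y [_ Ex] [_ Ey] v l i j Hp Hv Hj Hw Hx v' l' i' j' Hp' Hv' Hj' Hw' Hy Hle.
  have Eii : i = i'.
    rewrite -Hx /= eqxx in Ex; rewrite -Hy /= eqxx in Ey.
    by rewrite -Ey in Ex; case: Ex.
  subst i'.
  move=> u k Hk Hwk.
  have [iu [ju [Hu [Hju Hwu]]]] := pw CW Hk.
  rewrite Hwk -Hy in Hwu; case: Hwu => Eiu Esz Eju; subst iu.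
  have Eszk : size k = size l' by lia.
  exists (size l); split; first by rewrite Eszk.
  have Hpt := is_path_take (size l) Hk.
  have [i2 [j2 [Hu2 [Hj2 Hw2]]]] := pw CW Hpt.
  rewrite Hu in Hu2; case: Hu2 => Ei2; subst i2.
  have Esz2 : size (take (size l) k) = size l.
    by rewrite size_take Eszk; case: ltngtP Hle.
  have Hd := det CW Hpt Hp Esz2 (etrans Hu (esym Hv)).
  rewrite Hj2 Hj in Hd; case: Hd => Ejj; subst j2.
  by rewrite Hw2 Esz2 -Hx.
move=> x y Hx Hy.
have [_ [v [l [Hp Hw]]]] := proj1 Hx.
have [_ [v' [l' [Hp' Hw']]]] := proj1 Hy.
have [i [j [Hv [Hj Hwl]]]] := pw CW Hp.
have [i' [j' [Hv' [Hj' Hwl']]]] := pw CW Hp'.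
have Hxx : Some (i, Z.of_nat (size l), j) = x by rewrite -Hwl.
have Hyy : Some (i', Z.of_nat (size l'), j') = y by rewrite -Hwl'.
case: (leqP (size l) (size l')) => Hle.
  exists y; split => //; split.
    exact: (key x y Hx Hy v l i j Hp Hv Hj Hw Hxx v' l' i' j' Hp' Hv' Hj' Hw' Hyy Hle).
  exact: (key y y Hy Hy v' l' i' j' Hp' Hv' Hj' Hw' Hyy v' l' i' j' Hp' Hv' Hj' Hw' Hyy (leqnn _)).
exists x; split => //; split.
  exact: (key x x Hx Hx v l i j Hp Hv Hj Hw Hxx v l i j Hp Hv Hj Hw Hxx (leqnn _)).
exact: (key y x Hy Hx v' l' i' j' Hp' Hv' Hj' Hw' Hyy v l i j Hp Hv Hj Hw Hxx (ltnW Hle)).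
Qed.
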